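(* In every execution of the protocol Fever, the following two properties hold. (1) If a correct processor is in view $v$ at time $\mathtt t$ and in view $v'$ at a time $\mathtt t'\ge\mathtt t$, then $v'\ge v$. (2) If $v$ is initial and $0<j<k$, then no QC for view $v+j$ is formed before a QC for view $v+j-1$ has been formed.
   Context: Model. There is a set $\Pi=\{p_0,\dots,p_{n-1}\}$ of $n$ processors, and $t$ is the largest integer $<n/3$. At most $t$ processors are Byzantine (arbitrary behaviour); the others are correct. Authenticated channels, unforgeable signatures and threshold signatures are assumed. Each processor $p$ has a local clock $c(p)$. All clocks advance at the same rate as real time, except when the protocol forwards them. $\Gamma>0$ is a known constant. Underlying protocol. Views $v\in\mathbb N_{\ge0}$; a fixed integer $k\ge3$; $\mathtt{lead}(v)=p_i$ with $i=\lfloor v/k\rfloor\bmod n$; $v$ is initial iff $v\bmod k=0$. A quorum certificate (QC) for view $v$ is a threshold signature of $n-t$ distinct processors, and a correct processor contributes to a QC for view $v$ only while in view $v$. Protocol Fever. Set $\mathtt c_v=\Gamma v$. Each correct processor $p$ keeps a current view (initially $0$) and behaves as follows. (a) When $c(p)=\mathtt c_v$ for an initial view $v$, $p$ enters view $v$ and sends a $\mathtt{view}\ v$ message to $\mathtt{lead}(v)$. (b) Upon first seeing a QC for a view $v'$ at least its current view, $p$ enters view $v'+1$, and if $c(p)<\mathtt c_{v'+1}$ it sets $c(p):=\mathtt c_{v'+1}$. (c) Upon first seeing a view certificate (VC) for an initial view $v'$ greater than its current view, $p$ enters view $v'$, and if $c(p)<\mathtt c_{v'}$ it sets $c(p):=\mathtt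 c_{v'}$. (d) If $p=\mathtt{lead}(v')$ for some $v'$ at least its current view, then upon first receiving $\mathtt{view}\ v'$ messages from $t+1$ distinct processors, $p$ forms a VC (threshold signature) for $v'$ and sends it to all processors. A non-initial view is entered by a correct processor only via rule (b). *)

(* Defs.v *)
From HB Require Import structures.
From mathcomp Require Import all_boot all_order all_algebra.
From mathcomp Require Import reals.
Set Implicit Arguments. Unset Strict Implicit. Unset Printing Implicit Defensive.
Import Order.TTheory GRing.Theory Num.Theory.
Local Open Scope ring_scope.

(* t = largest integer < n/3 (for n >= 1): t = (n-1) div 3 *)
Definition fault_bound (n : nat) : nat := (n.-1 %/ 3)%N.

Section Fever.
Variable R : realType.
Variable n : nat.

(* Global state: real time, current view and local clock of every processor
   (only meaningful for correct processors). *)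
Record state := mkState {
  st_time  : R;
  st_view  : 'I_n -> nat;
  st_clock : 'I_n -> R }.

Inductive event :=
| Elapse     of R
| TimerEnter of 'I_n & nat          (* rule (a): p enters initial view v, sends [view v] to lead(v) *)
| QCEnter    of 'I_n & nat          (* rule (b): p sees a QC for v', enters v'+1 *)
| VCEnter    of 'I_n & nat          (* rule (c): p sees a VC for initial v', enters v' *)
| Share      of 'I_n & nat          (* p contributes its signature share to a QC for view v *)
| FormVC     of nat & {set 'I_n}    (* a VC for v is formed from [view v] msgs of the set S *)
| FormQC     of nat & {set 'I_n}.   (* a QC for v is formed from shares of the set S *)

Variable k : nat.
Variable Gamma : R.
Variable F : {set 'I_n}.            (* the Byzantine processors *)

Definition cv (v : nat) : R := Gamma * v%:R.
Definition initial (v : nat) : bool := (v %% k == 0)%N.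
Definition is_lead (p : 'I_n) (v : nat) : bool := (nat_of_ord p == (v %/ k) %% n)%N.

Definition upd {T : Type} (f : 'I_n -> T) (p : 'I_n) (x : T) : 'I_n -> T :=
  fun q => if q == p then x else f q.

Definition next (s : state) (e : event) : state :=
  match e with
  | Elapse d => mkState (st_time s + d) (st_view s) (fun p => st_clock s p + d)
  | TimerEnter p v => mkState (st_time s) (upd (st_view s) p v) (st_clock s)
  | QCEnter p v' => mkState (st_time s) (upd (st_view s) p v'.+1)
                      (upd (st_clock s) p (Num.max (st_clock s p) (cv v'.+1)))
  | VCEnter p v' => mkState (st_time s) (upd (st_view s) p v')
                      (upd (st_clock s) p (Num.max (st_clock s p) (cv v')))
  | _ => s
  end.

Definition QC_formed_at (ev : nat -> event) (i v : nat) : Prop :=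
  exists S, ev i = FormQC v S.
Definition VC_formed_at (ev : nat -> event) (i v : nat) : Prop :=
  exists S, ev i = FormVC v S.

Definition enabled (ev : nat -> event) (i : nat) (s : state) : Prop :=
  match ev i with
  | Elapse d => 0 <= d
  | TimerEnter p v => p \notin F /\ initial v /\ st_clock s p = cv v
  | QCEnter p v' =>
      p \notin F /\ (exists j, (j < i)%N /\ QC_formed_at ev j v') /\ (st_view s p <= v')%N
  | VCEnter p v' =>
      [/\ p \notin F, initial v', exists j, (j < i)%N /\ VC_formed_at ev j v'
        & (st_view s p < v')%N]
  | Share p v => p \notin F /\ st_view s p = v
  | FormVC v Sg =>
      [/\ ((fault_bound n).+1 <= #|Sg|)%N,
          (forall q, q \in Sg -> q \in F \/ exists j, (j < i)%N /\ ev j = TimerEnter q v)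
        & (forall p, is_lead p v -> p \notin F -> st_view s p <= v)%N]
  | FormQC v Sg =>
      (n - fault_bound n <= #|Sg|)%N /\
      (forall q, q \in Sg -> q \in F \/ exists j, (j < i)%N /\ ev j = Share q v)
  end.

(* An (infinite; finite ones can be padded with [Elapse 0]) execution of Fever:
   s i is the state before step i, ev i the i-th step. *)
Definition execution (ev : nat -> event) (s : nat -> state) : Prop :=
  (forall p, st_view (s 0%N) p = 0%N) /\
  (forall i, enabled ev i (s i) /\ s i.+1 = next (s i) (ev i)).

End Fever.

(* Main.v *)
Require Import Defs.
From HB Require Import structures.
From mathcomp Require Import all_boot all_order all_algebra.
From mathcomp Require Import reals.
From mathcomp Require Import zify.
Import Order.TTheory GRing.Theory Num.Theory.

Lemma find_change (f : nat -> nat) (a N : nat) :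
  f 0%N <> a -> f N = a -> exists m, (m < N)%N /\ f m <> a /\ f m.+1 = a.
Proof.
elim: N => [|N IH] h0 hN; first by rewrite hN in h0.
case: (eqVneq (f N) a) => [e|ne].
  have [m [h1 h2]] := IH h0 e. by exists m; split => //; apply: ltnW.
by exists N; split => //; split => //; apply/eqP.
Qed.

Theorem mainTheorem4 (R : realType) (n k : nat) (Gamma : R) (F : {set 'I_n})
    (ev : nat -> event R n) (s : nat -> state R n) :
  (0 < n)%N -> (3 <= k)%N -> (0 < Gamma)%R -> (#|F| <= fault_bound n)%N ->
  execution k Gamma F ev s ->
  (forall (p : 'I_n) (i j : nat), p \notin F -> (i <= j)%N ->
     (st_view (s i) p <= st_view (s j) p)%N) /\
  (forall (v j i : nat), initial k v -> (0 < j < k)%N ->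
     QC_formed_at ev i (v + j) ->
     exists i', (i' < i)%N /\ QC_formed_at ev i' (v + j - 1)).
Proof.
move=> n0 k3 G0 hF [init step].
have cvle : forall a b, (cv Gamma a <= cv Gamma b)%R = (a <= b)%N.
  by move=> a b; rewrite /cv ler_pM2l // ler_nat.
have cv0 : forall a, (0 <= cv Gamma a)%R.
  by move=> a; rewrite /cv mulr_ge0 // ltW.
have inv : forall i q, (cv Gamma (st_view (s i) q) <= Num.max (st_clock (s i) q) 0)%R.
  elim=> [|i IH] q.
    by rewrite init /cv mulr0 le_max lexx orbT.
  have [en ->] := step i.
  move: en (IH q); rewrite /enabled /Defs.next.
  case: (ev i) => [d|p v|p v|p v|p v|v S|v S] /=; rewrite /upd => //.
  - move=> d0 h; apply: (le_trans h).
    rewrite ge_max !le_max lexx orbT andbT.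
    by rewrite lerDl d0.
  - move=> [_ [_ hc]] h; case: ifP => [/eqP ->|_ //].
    by rewrite hc le_max lexx.
  - move=> _ h; case: ifP => [_|_ //].
    by rewrite !le_max lexx !orbT.
  - move=> _ h; case: ifP => [_|_ //].
    by rewrite !le_max lexx !orbT.
have mono1 : forall i q, (st_view (s i) q <= st_view (s i.+1) q)%N.
  move=> i q; have [en ->] := step i.
  move: en (inv i q); rewrite /enabled /Defs.next.
  case: (ev i) => [d|p v|p v|p v|p v|v S|v S] /=; rewrite /upd => //.
  - move=> [_ [_ hc]]; case: ifP => [/eqP ->|_ //] h.
    by rewrite -cvle; move: h; rewrite hc (max_idPl (cv0 v)).
  - move=> [_ [_ hv]]; case: ifP => [/eqP ->|_ //] _.
    by apply: (leq_trans hv).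
  - move=> [_ _ _ hv]; case: ifP => [/eqP ->|_ //] _.
    by apply: ltnW.
split.
  move=> p i j _ /subnK <-; elim: (j - i)%N => [|d IH] //.
  by rewrite addSn; apply: (leq_trans IH).
move=> v j i hv /andP [j0 jk] [S hS].
have [en _] := step i; move: en; rewrite /enabled hS => -[hcard hmem].
have [q qS qF] : exists2 q, q \in S & q \notin F.
  case: (boolP (S \subset F)) => [sub|].
    have := subset_leq_card sub.
    rewrite /fault_bound in hF hcard *.
    move=> h; exfalso; lia.
  by case/subsetPn => q h1 h2; exists q.
have [|[j1 [j1i hj1]]] := hmem q qS; first by rewrite (negbTE qF).
have [en1 _] := step j1; move: en1; rewrite /enabled hj1 => -[_ hview].
have noninit : ~~ initial k (v + j).
  by rewrite /initial -modnDml (eqP hv) add0n modn_small // -lt0n.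
have [m [mj [hm1 hm2]]] : exists m, (m < j1)%N /\ st_view (s m) q <> v + j /\ st_view (s m.+1) q = v + j.
  by apply: (find_change (fun m => st_view (s m) q)) => //=; rewrite init; lia.
move: hm1 hm2 => /= hm1 hm2.
have [enm em] := step m; move: hm2; rewrite em; move: enm.
rewrite /enabled /Defs.next.
case: (ev m) => [d|p w|p w|p w|p w|w T|w T] /=; rewrite /upd => //.
- move=> [_ [hw _]]; case: ifP => [_ hw'|_ //]; subst w.
  by rewrite hw in noninit.
- move=> [_ [[j' [j'm hq]] _]]; case: ifP => [_ hw|_ //].
  exists j'; split; first by apply: (ltn_trans j'm); apply: (ltn_trans mj).
  by rewrite -hw subn1 /=.
- move=> [_ hw _ _]; case: ifP => [_ hw'|_ //]; subst w.
  by rewrite hw in noninit.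
Qed.
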